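(* A tiling of the unit square by axis-parallel rectangles which is fixed by the dihedral group $D_8$ of symmetries of the square has either $4k$ or $4k+1$ tiles, for some nonnegative integer $k$.
   Context: A tiling of the unit square is a decomposition into finitely many axis-parallel rectangles with disjoint interiors; $D_8$ (order $8$) acts on tilings via the symmetries of the square, and a tiling is fixed if every symmetry maps it to itself. *)

(* Defs.v *)
From Stdlib Require Import Reals List.
Import ListNotations.
Open Scope R_scope.

Record rect : Type := Rect { rx0 : R; rx1 : R; ry0 : R; ry1 : R }.

Definition valid_rect (r : rect) : Prop :=
  0 <= rx0 r /\ rx0 r < rx1 r /\ rx1 r <= 1 /\
  0 <= ry0 r /\ ry0 r < ry1 r /\ ry1 r <= 1.

Definition in_rect (r : rect) (p : R * R) : Prop :=
  rx0 r <= fst p <= rx1 r /\ ry0 r <= snd p <= ry1 r.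

Definition in_interior (r : rect) (p : R * R) : Prop :=
  rx0 r < fst p < rx1 r /\ ry0 r < snd p < ry1 r.

Definition in_unit_square (p : R * R) : Prop :=
  0 <= fst p <= 1 /\ 0 <= snd p <= 1.

Definition is_tiling (T : list rect) : Prop :=
  NoDup T /\
  (forall r, In r T -> valid_rect r) /\
  (forall r s, In r T -> In s T -> r <> s ->
     forall p, ~ (in_interior r p /\ in_interior s p)) /\
  (forall p, in_unit_square p -> exists r, In r T /\ in_rect r p).

(* The dihedral group D_8 of the square [0,1]^2: an element is encoded by
   (swap, fx, fy): first optionally swap coordinates, then optionally reflect
   the first coordinate x |-> 1-x and the second y |-> 1-y.  These 8 maps are
   exactly the symmetries of the unit square. *)
Definition D8 : Type := (bool * bool * bool)%type.

Definition d8_act (g : D8) (p : R * R) : R * R :=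
  let '(sw, fx, fy) := g in
  let '(u, v) := if sw then (snd p, fst p) else (fst p, snd p) in
  (if fx then 1 - u else u, if fy then 1 - v else v).

Definition fixed_by (g : D8) (T : list rect) : Prop :=
  forall r, In r T -> exists s, In s T /\
    forall p, in_rect s p <-> exists q, in_rect r q /\ p = d8_act g q.

Definition D8_fixed (T : list rect) : Prop := forall g : D8, fixed_by g T.

(* Main.v *)
Require Import Defs.
From Stdlib Require Import Reals List.
From Stdlib Require Import Lra Lia Classical.
Import ListNotations.
Open Scope R_scope.

Section Count.
Variable A : Type.
Variable dec : forall x y : A, {x = y} + {x <> y}.

Lemma rm_len (x : A) (l : list A) : NoDup l -> In x l ->
  length l = S (length (remove dec x l)).
Proof.
  induction l as [|a l IH]; intros Hn Hi; [destruct Hi|].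
  inversion Hn; subst. simpl. destruct (dec x a) as [->|Hne].
  - rewrite notin_remove; auto.
  - destruct Hi as [->|Hi]; [congruence|]. simpl. rewrite IH; auto.
Qed.

Lemma rm_nodup (x : A) (l : list A) : NoDup l -> NoDup (remove dec x l).
Proof.
  induction l as [|a l IH]; intros Hn; simpl; [constructor|].
  inversion Hn; subst. destruct (dec x a); auto.
  constructor; auto. intro H; apply in_remove in H; tauto.
Qed.

Lemma rm_in (x y : A) l : In y (remove dec x l) <-> In y l /\ y <> x.
Proof. split; [apply in_remove|]. intros [H1 H2]; apply in_in_remove; auto. Qed.

Variable f : A -> A.
Hypothesis f4 : forall x, f (f (f (f x))) = x.

Lemma finj x y : f x = f y -> x = y.
Proof. intro H. rewrite <- (f4 x), <- (f4 y), H. reflexivity. Qed.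

Lemma count4 : forall n (L : list A), (length L <= n)%nat -> NoDup L ->
  (forall x, In x L -> In (f x) L) -> (forall x, In x L -> f (f x) <> x) ->
  exists k, length L = (4 * k)%nat.
Proof.
  induction n as [|n IH]; intros L Hl Hn Hc Hf.
  - exists 0%nat. lia.
  - destruct L as [|x L0] eqn:EL.
    + exists 0%nat. reflexivity.
    + rewrite <- EL in *. assert (Hx : In x L) by (subst; left; auto).
      clear EL L0.
      pose (x1 := f x). pose (x2 := f x1). pose (x3 := f x2).
      assert (H1 : In x1 L) by (apply Hc; auto).
      assert (H2 : In x2 L) by (apply Hc; auto).
      assert (H3 : In x3 L) by (apply Hc; auto).
      assert (N02 : x2 <> x) by (apply Hf; auto).
      assert (N01 : x1 <> x) by (intro E; apply N02; unfold x2; rewrite E; exact E).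
      assert (N12 : x2 <> x1) by (intro E; apply N01; apply finj; exact E).
      assert (N23 : x3 <> x2) by (intro E; apply N12; apply finj; exact E).
      assert (N13 : x3 <> x1) by (intro E; apply N02; apply finj; exact E).
      assert (N03 : x3 <> x) by (intro E; apply N01;
        assert (HH : f x3 = x) by apply f4; rewrite E in HH; exact HH).
      set (L1 := remove dec x3 L).
      set (L2 := remove dec x2 L1).
      set (L3 := remove dec x1 L2).
      set (L4 := remove dec x L3).
      assert (D1 : NoDup L1) by (apply rm_nodup; auto).
      assert (D2 : NoDup L2) by (apply rm_nodup; auto).
      assert (D3 : NoDup L3) by (apply rm_nodup; auto).
      assert (D4 : NoDup L4) by (apply rm_nodup; auto).
      assert (I4 : forall y, In y L4 <-> In y L /\ y <> x3 /\ y <> x2 /\ y <> x1 /\ y <> x).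
      { intro y. unfold L4, L3, L2, L1. rewrite !rm_in. tauto. }
      assert (Len : length L = (length L4 + 4)%nat).
      { rewrite (rm_len x3 L); auto. fold L1.
        rewrite (rm_len x2 L1); auto. 2:{ unfold L1. rewrite rm_in. auto. } fold L2.
        rewrite (rm_len x1 L2); auto. 2:{ unfold L2, L1. rewrite !rm_in. auto. } fold L3.
        rewrite (rm_len x L3); auto. 2:{ unfold L3, L2, L1. rewrite !rm_in. auto. }
        fold L4. lia. }
      destruct (IH L4) as [k Hk]; auto.
      * lia.
      * intros y Hy. apply I4 in Hy. destruct Hy as (Hy & a3 & a2 & a1 & a0).
        apply I4. split; [apply Hc; auto|].
        repeat split; intro E.
        -- apply a2. apply finj. exact E.
        -- apply a1. apply finj. exact E.
        -- apply a0. apply finj. exact E.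
        -- apply a3. apply finj. rewrite E. unfold x3, x2, x1. symmetry. apply f4.
      * intros y Hy. apply Hf. apply I4 in Hy. tauto.
      * exists (S k). lia.
Qed.

Lemma count41 (L : list A) : NoDup L ->
  (forall x, In x L -> In (f x) L) ->
  (forall x y, In x L -> In y L -> f (f x) = x -> f (f y) = y -> x = y) ->
  exists k, length L = (4 * k)%nat \/ length L = (4 * k + 1)%nat.
Proof.
  intros Hn Hc Hu.
  destruct (classic (exists c, In c L /\ f (f c) = c)) as [[c [Hc1 Hc2]]|Hno].
  - assert (Hfc : f c = c).
    { apply (Hu (f c) c); auto. rewrite Hc2. reflexivity. }
    destruct (count4 (length (remove dec c L)) (remove dec c L)) as [k Hk].
    + lia.
    + apply rm_nodup; auto.
    + intros y Hy. apply rm_in in Hy. destruct Hy as [Hy Hyc]. apply rm_in. split; auto.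
      intro E. apply Hyc. apply finj. rewrite E, Hfc. reflexivity.
    + intros y Hy E. apply rm_in in Hy. destruct Hy as [Hy Hyc]. apply Hyc. apply Hu; auto.
    + exists k. right. rewrite (rm_len c L); auto. lia.
  - destruct (count4 (length L) L) as [k Hk]; auto.
    + intros y Hy E. apply Hno. eauto.
    + exists k; auto.
Qed.
End Count.

Definition rotR (r : rect) : rect :=
  Rect (1 - ry1 r) (1 - ry0 r) (rx0 r) (rx1 r).

Lemma rotR4 r : rotR (rotR (rotR (rotR r))) = r.
Proof. destruct r; unfold rotR; simpl; f_equal; ring. Qed.

Lemma rect_dec (r s : rect) : {r = s} + {r <> s}.
Proof.
  destruct r as [a b c d], s as [a' b' c' d'].
  destruct (Req_EM_T a a'); [|right; congruence].
  destruct (Req_EM_T b b'); [|right; congruence].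
  destruct (Req_EM_T c c'); [|right; congruence].
  destruct (Req_EM_T d d'); [|right; congruence].
  left; subst; reflexivity.
Qed.

Lemma rect_ext (s t : rect) :
  rx0 s <= rx1 s -> ry0 s <= ry1 s -> rx0 t <= rx1 t -> ry0 t <= ry1 t ->
  (forall p, in_rect s p <-> in_rect t p) -> s = t.
Proof.
  intros a b c d H.
  pose proof (proj1 (H (rx0 s, ry0 s))) as H1.
  pose proof (proj1 (H (rx1 s, ry1 s))) as H2.
  pose proof (proj2 (H (rx0 t, ry0 t))) as H3.
  pose proof (proj2 (H (rx1 t, ry1 t))) as H4.
  unfold in_rect in *; simpl in *.
  destruct s, t; simpl in *. f_equal; lra.
Qed.

Lemma rot_in_T T r : is_tiling T -> D8_fixed T -> In r T -> In (rotR r) T.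
Proof.
  intros [_ [Hv _]] Hfix Hr.
  destruct (Hfix (true, true, false) r Hr) as [s [Hs Hsp]].
  replace (rotR r) with s; auto.
  pose proof (Hv r Hr) as Vr. pose proof (Hv s Hs) as Vs.
  unfold valid_rect in *.
  apply rect_ext; unfold rotR; simpl; try lra.
  intros [a b]. rewrite Hsp. unfold in_rect; simpl. split.
  - intros [[q1 q2] [Hq E]]. simpl in E. injection E; intros; subst.
    simpl in Hq. lra.
  - intros Hp. exists (b, 1 - a). simpl. split; [lra|].
    f_equal; ring.
Qed.

Theorem lemma10 (T : list rect) :
  is_tiling T -> D8_fixed T ->
  exists k : nat, length T = (4 * k)%nat \/ length T = (4 * k + 1)%nat.
Proof.
  intros Ht Hfix.
  apply (count41 rect rect_dec rotR rotR4); [apply Ht| |].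
  - intros x Hx. apply rot_in_T; auto.
  - destruct Ht as [_ [Hv [Hd _]]].
    intros x y Hx Hy Ex Ey.
    destruct (classic (x = y)) as [|Hne]; auto. exfalso.
    apply (Hd x y Hx Hy Hne (/2, /2)).
    pose proof (Hv x Hx) as Vx. pose proof (Hv y Hy) as Vy.
    destruct x, y; unfold rotR in *; simpl in *.
    injection Ex; injection Ey; intros.
    unfold valid_rect, in_interior in *; simpl in *. lra.
Qed.
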